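(* Let $n\ge 2$, let $\ket{\Psi}=\frac{1}{\sqrt2}(\ket{0}^{\otimes n}+\ket{1}^{\otimes n})$, and for a real $\theta$ let $R_z(\theta)=\begin{pmatrix}e^{-i\theta/2}&0\\0&e^{i\theta/2}\end{pmatrix}$. For $0\le j\le\lceil\log_2 n\rceil$ consider round $j$: first $R_z(-\pi/2^j)$ is applied to the first qubit of a fresh copy of $\ket{\Psi}$ (producing $\ket{t_j}$); then each of a set $K$ of $k$ players (qubits) applies $R_z(\pi/2^j)$ to his own qubit; then $H^{\otimes n}$ is applied ($H$ the Hadamard gate) and all $n$ qubits are measured in the computational basis, giving $x\in\{0,1\}^n$. Then: (i) if $2\le k\le n$, there exists $j\in\{0,\dots,\lceil\log_2 n\rceil\}$ such that in round $j$ the outcome $x$ has odd Hamming weight with probability $1$ (the state before the Hadamard transforms equals, up to global phase, $\frac{1}{\sqrt2}(\ket{0}^{\otimes n}-\ket{1}^{\otimes n})$); (ii) if $k=1$, then in every round $j$ the outcome $x$ has even Hamming weight with probability $1$ (the state before the Hadamard transforms equals $\ket{\Psi}$ up to global phase).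
   Context: Qubits are indexed by players; an operator applied by a player acts only on that player's tensor factor. The rotations applied in a round act on distinct or identical qubits of the same $n$-qubit state. *)

(* Defs.v *)
From HB Require Import structures.
From mathcomp Require Import all_boot all_order all_algebra.
From mathcomp Require Import all_classical all_reals all_analysis.
From mathcomp Require Import complex.
Set Implicit Arguments. Unset Strict Implicit. Unset Printing Implicit Defensive.
Import Order.TTheory GRing.Theory Num.Theory.
Local Open Scope ring_scope.
Local Open Scope complex_scope.

Section Q.
Variable R : realType.
Variable n : nat.

Definition bits := {ffun 'I_n -> bool}.
Definition qstate := bits -> R[i].
(* a single-qubit gate, as its 2x2 matrix indexed by bits: U out in *)
Definition gate := bool -> bool -> R[i].

Definition expi (t : R) : R[i] := (cos t +i* sin t).

Definition Rz (theta : R) : gate := fun a b =>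
  if a == b then (if a then expi (theta / 2) else expi (- (theta / 2))) else 0.

Definition hadamard : gate := fun a b =>
  (if a && b then -1 else 1) / (Num.sqrt 2%:R)%:C.

Definition setbit (x : bits) (q : 'I_n) (b : bool) : bits :=
  [ffun i => if i == q then b else x i].

Definition apply1 (U : gate) (q : 'I_n) (psi : qstate) : qstate :=
  fun x => \sum_(b : bool) U (x q) b * psi (setbit x q b).

Definition apply_on (U : gate) (Q : {set 'I_n}) (psi : qstate) : qstate :=
  foldr (fun i phi => apply1 U i phi) psi (enum Q).

Definition hadamard_all (psi : qstate) : qstate := apply_on hadamard [set: 'I_n] psi.

Definition all0 (x : bits) : bool := [forall i, ~~ x i].
Definition all1 (x : bits) : bool := [forall i, x i].

Definition GHZ : qstate := fun x =>
  if all0 x then (Num.sqrt 2%:R)^-1%:C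
  else if all1 x then (Num.sqrt 2%:R)^-1%:C else 0.

Definition GHZminus : qstate := fun x =>
  if all0 x then (Num.sqrt 2%:R)^-1%:C
  else if all1 x then - (Num.sqrt 2%:R)^-1%:C else 0.

Definition hweight (x : bits) : nat := #|[set i | x i]|.

Definition prob_odd (psi : qstate) : R[i] :=
  \sum_(x : bits | odd (hweight x)) `|psi x| ^+ 2.
Definition prob_even (psi : qstate) : R[i] :=
  \sum_(x : bits | ~~ odd (hweight x)) `|psi x| ^+ 2.

(* round j: R_z(-pi/2^j) on the first qubit q0 of a fresh |Psi> gives |t_j>,
   then every player in K applies R_z(pi/2^j) to his qubit *)
Definition t_state (q0 : 'I_n) (j : nat) : qstate :=
  apply1 (Rz (- (pi / 2%:R ^+ j))) q0 GHZ.
Definition pre_state (q0 : 'I_n) (K : {set 'I_n}) (j : nat) : qstate :=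
  apply_on (Rz (pi / 2%:R ^+ j)) K (t_state q0 j).
Definition final_state (q0 : 'I_n) (K : {set 'I_n}) (j : nat) : qstate :=
  hadamard_all (pre_state q0 K j).

End Q.

(* Main.v *)
Require Import Defs.
From HB Require Import structures.
From mathcomp Require Import all_boot all_order all_algebra.
From mathcomp Require Import all_classical all_reals all_analysis.
From mathcomp Require Import complex.
From mathcomp Require Import ring lra.
Import Order.TTheory GRing.Theory Num.Theory.
Local Open Scope ring_scope.
Local Open Scope complex_scope.
Set Implicit Arguments. Unset Strict Implicit.

Section S.
Variable R : realType.

Lemma expiD (a b : R) : expi a * expi b = expi (a + b).
Proof.
rewrite /expi cosD sinD; apply/eqP; rewrite eq_complex /=; apply/andP; split; apply/eqP; ring.
Qed.

Lemma expi0 : expi (0 : R) = 1.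
Proof. by rewrite /expi cos0 sin0. Qed.

Lemma expipi : expi (pi : R) = -1.
Proof. by rewrite /expi cospi sinpi; apply/eqP; rewrite eq_complex /= oppr0 !eqxx. Qed.

Lemma expiX (a : R) k : expi a ^+ k = expi (k%:R * a).
Proof.
elim: k => [|k IH]; first by rewrite expr0 mul0r expi0.
by rewrite exprS IH expiD -{1}(mul1r a) -mulrDl -natr1 addrC.
Qed.

Lemma norm_expi (a : R) : `|expi a| = 1.
Proof.
by rewrite normc_def /= cos2Dsin2 sqrtr1.
Qed.
End S.

Section S2.
Variable R : realType.
Variable n : nat.

Definition ghz2 (a b : R[i]) : qstate R n := fun x =>
  if all0 x then a else if all1 x then b else 0.

Lemma setbit_id (x : bits n) q : setbit x q (x q) = x.
Proof. by apply/ffunP => i; rewrite ffunE; case: eqP => // ->. Qed.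

Lemma setbit_q (x : bits n) q b : setbit x q b q = b.
Proof. by rewrite ffunE eqxx. Qed.

Lemma setbit_ne (x : bits n) q b i : i != q -> setbit x q b i = x i.
Proof. by rewrite ffunE => /negPf ->. Qed.

Lemma apply1_diag (U : gate R) q (psi : qstate R n) :
  (forall a b, a != b -> U a b = 0) ->
  apply1 U q psi = fun x => U (x q) (x q) * psi x.
Proof.
move=> HU; apply: funext => x; rewrite /apply1 big_bool /=.
case xq: (x q).
  by rewrite (HU true false) // mul0r addr0 -xq setbit_id.
by rewrite (HU false true) // mul0r add0r -xq setbit_id.
Qed.

Lemma apply1_Rz th q (a b : R[i]) :
  apply1 (Rz th) q (ghz2 a b) = ghz2 (expi (- (th / 2)) * a) (expi (th / 2) * b).
Proof.
rewrite apply1_diag; last by move=> u v; rewrite /Rz => /negbTE ->.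
apply: funext => x; rewrite /Rz /ghz2 eqxx.
case: (boolP (all0 x)) => [/forallP H0|N0].
  by have -> : x q = false by apply/negbTE/H0.
case: (boolP (all1 x)) => [/forallP H1|N1].
  by have -> : x q = true by apply: H1.
by rewrite mulr0.
Qed.

Lemma foldr_Rz th (s : seq 'I_n) (a b : R[i]) :
  foldr (fun i phi => apply1 (Rz th) i phi) (ghz2 a b) s =
  ghz2 (expi (- (th / 2)) ^+ size s * a) (expi (th / 2) ^+ size s * b).
Proof.
elim: s => [|q s IH] /=; first by rewrite !expr0 !mul1r.
by rewrite IH apply1_Rz !exprS !mulrA.
Qed.

Lemma apply_on_Rz th (K : {set 'I_n}) (a b : R[i]) :
  apply_on (Rz th) K (ghz2 a b) =
  ghz2 (expi (- (th / 2)) ^+ #|K| * a) (expi (th / 2) ^+ #|K| * b).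
Proof. by rewrite /apply_on foldr_Rz cardE. Qed.

Definition phiH (s : seq 'I_n) (a b : R[i]) : qstate R n := fun x =>
  (if [forall i, (i \in s) || ~~ x i] then a * \prod_(i <- s) hadamard R (x i) false else 0)
+ (if [forall i, (i \in s) || x i] then b * \prod_(i <- s) hadamard R (x i) true else 0).

Lemma apply1_phiH q s a b : q \notin s ->
  apply1 (hadamard R) q (phiH s a b) = phiH (q :: s) a b.
Proof.
move=> qs; apply: funext => x; rewrite /apply1 big_bool /= /phiH.
have Hp c : \prod_(i <- s) hadamard R (setbit x q c i) c = \prod_(i <- s) hadamard R (x i) c.
  apply: eq_big_seq => i iS; rewrite setbit_ne //; apply/eqP => eiq.
  by move: qs; rewrite -eiq iS.
rewrite !Hp !big_cons.
have C0 c : [forall i, (i \in s) || ~~ setbit x q c i] = ~~ c && [forall i, (i \in q :: s) || ~~ x i].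
  apply/forallP/andP => [H|[Hc /forallP H] i].
    split; first by move: (H q); rewrite setbit_q (negbTE qs).
    apply/forallP => i; rewrite inE; case: (eqVneq i q) => //= iq.
    by move: (H i); rewrite setbit_ne.
  case: (eqVneq i q) => [->|iq]; first by rewrite setbit_q Hc orbT.
  by rewrite setbit_ne //; move: (H i); rewrite inE (negbTE iq).
have C1 c : [forall i, (i \in s) || setbit x q c i] = c && [forall i, (i \in q :: s) || x i].
  apply/forallP/andP => [H|[Hc /forallP H] i].
    split; first by move: (H q); rewrite setbit_q (negbTE qs).
    apply/forallP => i; rewrite inE; case: (eqVneq i q) => //= iq.
    by move: (H i); rewrite setbit_ne.
  case: (eqVneq i q) => [->|iq]; first by rewrite setbit_q Hc orbT.
  by rewrite setbit_ne //; move: (H i); rewrite inE (negbTE iq).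
rewrite !C0 !C1 /=.
case: ifP => _; case: ifP => _; rewrite ?mulr0 ?addr0 ?add0r; ring.
Qed.

Lemma phiH_nil (q0 : 'I_n) a b : phiH [::] a b = ghz2 a b.
Proof.
apply: funext => x; rewrite /phiH /ghz2 !big_nil !mulr1.
have E0 : [forall i, (i \in [::]) || ~~ x i] = all0 x by [].
have E1 : [forall i, (i \in [::]) || x i] = all1 x by [].
rewrite E0 E1; case: (boolP (all0 x)) => [/forallP H0|N0].
  have -> : all1 x = false by apply/negbTE/negP => /forallP/(_ q0); move: (H0 q0) => /negbTE ->.
  by rewrite addr0.
by rewrite add0r.
Qed.

Lemma foldr_H (q0 : 'I_n) s a b : uniq s ->
  foldr (fun i phi => apply1 (hadamard R) i phi) (ghz2 a b) s = phiH s a b.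
Proof.
elim: s => [|q s IH] /=; first by rewrite (phiH_nil q0).
by case/andP => qs us; rewrite IH // apply1_phiH.
Qed.

Lemma hadamard_ghz2 (q0 : 'I_n) a b :
  hadamard_all (ghz2 a b) = fun x =>
    a * \prod_(i <- enum [set: 'I_n]) hadamard R (x i) false +
    b * \prod_(i <- enum [set: 'I_n]) hadamard R (x i) true.
Proof.
rewrite /hadamard_all /apply_on (foldr_H q0) ?enum_uniq //.
apply: funext => x; rewrite /phiH.
have T : forall P : 'I_n -> bool, [forall i, (i \in enum [set: 'I_n]) || P i].
  by move=> P; apply/forallP => i; rewrite mem_enum inE.
by rewrite !T.
Qed.

Definition hh : R[i] := ((Num.sqrt 2%:R)^-1)%:C.

Lemma hadamard_false c : hadamard R c false = hh.
Proof. by rewrite /hadamard andbF mul1r /hh fmorphV. Qed.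

Lemma hadamard_true c : hadamard R c true = (if c then -1 else 1) * hh.
Proof. by rewrite /hadamard andbT /hh fmorphV. Qed.

Lemma prodH0 (x : bits n) : \prod_(i <- enum [set: 'I_n]) hadamard R (x i) false = hh ^+ n.
Proof.
rewrite big_enum /=; under eq_bigr do rewrite hadamard_false.
by rewrite prodr_const cardsT card_ord.
Qed.

Lemma prodH1 (x : bits n) : \prod_(i <- enum [set: 'I_n]) hadamard R (x i) true
   = (-1) ^+ hweight x * hh ^+ n.
Proof.
rewrite big_enum /=; under eq_bigr do rewrite hadamard_true.
rewrite big_split /= prodr_const cardsT card_ord; congr (_ * _).
rewrite (eq_bigl xpredT); last by move=> i; rewrite inE.
rewrite -(big_mkcond (fun i => x i)) /=.
rewrite (eq_bigl (fun i => i \in [set i | x i])) ?prodr_const // => i.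
by rewrite inE.
Qed.

Definition flipb (q : 'I_n) (x : bits n) : bits n := setbit x q (~~ x q).

Lemma flipbK q : involutive (flipb q).
Proof.
move=> x; apply/ffunP => i; rewrite /flipb !ffunE eqxx.
by case: (eqVneq i q) => [->|]; rewrite ?negbK.
Qed.

Lemma odd_flipb q x : odd (hweight (flipb q x)) = ~~ odd (hweight x).
Proof.
rewrite /hweight.
have E : [set i | flipb q x i] = if x q then [set i | x i] :\ q else q |: [set i | x i].
  apply/setP => i; rewrite /flipb; case: ifP => xq; rewrite !inE ffunE;
  by case: (eqVneq i q) => [->|]; rewrite ?xq.
rewrite E; case: ifP => xq.
  by have := cardsD1 q [set i | x i]; rewrite inE xq => ->; rewrite /= negbK.
by have := cardsU1 q [set i | x i]; rewrite inE xq => ->.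
Qed.

Lemma card_odd (q : 'I_n) : (#|[set x : bits n | odd (hweight x)]| + #|[set x : bits n | odd (hweight x)]| = 2 ^ n)%N.
Proof.
have Heq : #|[set x : bits n | ~~ odd (hweight x)]| = #|[set x : bits n | odd (hweight x)]|.
  rewrite -(card_preimset _ (can_inj (flipbK q))); apply: eq_card => x.
  by rewrite !inE odd_flipb negbK.
rewrite -{2}Heq.
have -> : #|[set x : bits n | ~~ odd (hweight x)]| = #|~: [set x : bits n | odd (hweight x)]|.
  by apply: eq_card => x; rewrite !inE.
by rewrite cardsC card_ffun card_bool card_ord.
Qed.

Lemma final_ghz2 (q0 : 'I_n) a b x :
  hadamard_all (ghz2 a b) x = hh ^+ n * (a + b * (-1) ^+ hweight x).
Proof. by rewrite (hadamard_ghz2 q0) prodH0 prodH1; ring. Qed.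

Lemma hh_ge0 : 0 <= hh.
Proof. by rewrite /hh ler0c invr_ge0 sqrtr_ge0. Qed.

Lemma hh2 : hh ^+ 2 = 2^-1.
Proof.
rewrite /hh -rmorphXn exprVn sqr_sqrtr ?ler0n // fmorphV /=.
by rewrite rmorph_nat.
Qed.

Lemma card_even (q : 'I_n) : #|[set x : bits n | ~~ odd (hweight x)]| = #|[set x : bits n | odd (hweight x)]|.
Proof.
rewrite -(card_preimset _ (can_inj (flipbK q))); apply: eq_card => x.
by rewrite !inE odd_flipb negbK.
Qed.

Lemma sum_half (q0 : 'I_n) (A : {set bits n}) : #|A| = #|[set x : bits n | odd (hweight x)]| ->
  (2 * (2^-1) ^+ n : R[i]) *+ #|A| = 1.
Proof.
move=> ->; rewrite -(mulr_natr (2 * (2^-1) ^+ n)) -mulrA.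
have -> : (#|[set x : bits n | odd (hweight x)]|%:R : R[i]) = 2 ^+ n / 2.
  apply: (mulfI (x := 2)); first by rewrite pnatr_eq0.
  by rewrite mulrCA divff ?pnatr_eq0 // mulr1 mulr_natl mulr2n -natrD card_odd // natrX.
rewrite exprVn; field; by rewrite ?expf_neq0 ?pnatr_eq0.

Qed.

Lemma normd (q0 : 'I_n) (c : R[i]) (e : bool) x : `|c| = 1 -> odd (hweight x) = e ->
   `|hadamard_all (ghz2 (c * hh) ((-1) ^+ e * (c * hh))) x| ^+ 2 = 2 * (2^-1) ^+ n.
Proof.
  move=> nc ox; rewrite (final_ghz2 q0) -[(-1) ^+ hweight x]signr_odd ox.
  have -> : c * hh + (-1) ^+ e * (c * hh) * (-1) ^+ e = 2 * c * hh.
    by case: (e); rewrite ?expr1 ?expr0; ring.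
  rewrite !normrM normrX (ger0_norm hh_ge0) (ger0_norm (ler0n _ 2)) nc mulr1.
  rewrite !exprMn -exprM mulnC exprM hh2; by field.
Qed.

Lemma prob_odd_final (q0 : 'I_n) (c : R[i]) : `|c| = 1 ->
  prob_odd (hadamard_all (ghz2 (c * hh) ((-1) ^+ true * (c * hh)))) = 1.
Proof.
move=> nc; rewrite /prob_odd (eq_bigr (fun _ => 2 * (2^-1) ^+ n)); last first.
  by move=> x ox; apply: (normd q0).
rewrite (eq_bigl (fun x => x \in [set x : bits n | odd (hweight x)])); last by move=> x; rewrite inE.
by rewrite sumr_const (sum_half q0).
Qed.

Lemma prob_even_final (q0 : 'I_n) (c : R[i]) : `|c| = 1 ->
  prob_even (hadamard_all (ghz2 (c * hh) ((-1) ^+ false * (c * hh)))) = 1.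
Proof.
move=> nc; rewrite /prob_even (eq_bigr (fun _ => 2 * (2^-1) ^+ n)); last first.
  by move=> x ox; apply: (normd q0) => //; apply/negbTE.
rewrite (eq_bigl (fun x => x \in [set x : bits n | ~~ odd (hweight x)])); last by move=> x; rewrite inE.
by rewrite sumr_const (sum_half q0) // (card_even q0).
Qed.
End S2.

Lemma two_adic m : (0 < m)%N -> exists j r, odd r /\ m = (2 ^ j * r)%N.
Proof.
elim: m {-2}m (leqnn m) => [|N IH] m Hm m0; first by move: m0; rewrite leqn0 in Hm; move/eqP: Hm => ->.
case om: (odd m); first by exists 0%N, m; rewrite expn0 mul1n.
have E := odd_double_half m; rewrite om add0n in E.
have h0 : (0 < m./2)%N by move: m0; rewrite -{1}E double_gt0.
have hl : (m./2 <= N)%N.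
  rewrite -ltnS; apply: leq_trans Hm; rewrite -{2}E -addnn -[X in (X < _)%N]add0n ltn_add2r //.
have [j [r [hr Er]]] := IH _ hl h0.
by exists j.+1, r; rewrite -E Er expnS -mulnA -muln2 mulnC.
Qed.

Unset Implicit Arguments.
Theorem mainTheorem7 (R : realType) (n : nat) (q0 : 'I_n) (K : {set 'I_n}) :
  (2 <= n)%N -> nat_of_ord q0 = 0%N ->
  ((2 <= #|K|)%N ->
     exists j : nat, (j <= up_log 2 n)%N /\
       (exists c : R[i], `|c| = 1 /\
          pre_state R q0 K j = (fun x => c * GHZminus R x)) /\
       prob_odd (final_state R q0 K j) = 1)
  /\
  (#|K| = 1%N ->
     forall j : nat, (j <= up_log 2 n)%N ->
       (exists c : R[i], `|c| = 1 /\
          pre_state R q0 K j = (fun x => c * GHZ R x)) /\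
       prob_even (final_state R q0 K j) = 1).
Proof.
move=> n2 _.
pose cc j := expi (#|K|%:R * (- (((pi : R) / 2%:R ^+ j) / 2)) + - ((- ((pi : R) / 2%:R ^+ j)) / 2)).
have pre j : (0 < #|K|)%N ->
  pre_state R q0 K j = ghz2 (cc j * hh R) (expi ((#|K|.-1)%:R * ((pi : R) / 2%:R ^+ j)) * (cc j * hh R)).
  move=> k0.
  rewrite /pre_state /t_state.
  have -> : GHZ R (n:=n) = ghz2 (hh R) (hh R) by [].
  rewrite apply1_Rz apply_on_Rz !expiX !mulrA !expiD.
  congr ghz2; congr (_ * _); rewrite /cc; congr expi.
  case: #|K| k0 => // m _; rewrite -natr1 /=; field.
  by rewrite expf_neq0 // pnatr_eq0.
have Hg c : (fun x => c * GHZminus R x) = ghz2 (c * hh R) ((-1) ^+ true * (c * hh R)) :> qstate R n.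
  apply: funext => x; rewrite /GHZminus /ghz2 /hh; case: ifP => _; first by [].
  by case: ifP => _; rewrite ?mulr0 // expr1 mulN1r mulrN.
have Hg' c : (fun x => c * GHZ R x) = ghz2 (c * hh R) ((-1) ^+ false * (c * hh R)) :> qstate R n.
  apply: funext => x; rewrite /GHZ /ghz2 /hh expr0 mul1r; case: ifP => _; first by [].
  by case: ifP => _; rewrite ?mulr0.
split.
  move=> k2.
  have km : (0 < #|K|.-1)%N by rewrite -subn1 subn_gt0.
  have [j [r [hr Er]]] := two_adic km.
  exists j; split.
    have : (2 ^ j < 2 ^ up_log 2 n)%N.
      apply: (@leq_trans n); last exact: up_logP.
      apply: (@leq_trans #|K|); last by rewrite -[X in (_ <= X)%N]card_ord max_card.
      rewrite -(prednK (ltnW k2)) ltnS Er leq_pmulr //.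
      by case: (r) hr.
    by rewrite ltn_exp2l // => /ltnW.
  have k0 : (0 < #|K|)%N by apply: ltn_trans k2.
  have E : expi ((#|K|.-1)%:R * ((pi : R) / 2%:R ^+ j)) = (-1) ^+ true.
    have -> : (#|K|.-1)%:R * ((pi : R) / 2%:R ^+ j) = r%:R * pi.
      rewrite Er natrM natrX; field; by rewrite expf_neq0 // pnatr_eq0.
    by rewrite -expiX expipi -[LHS]signr_odd hr.
  have nc : `|cc j| = 1 by apply: norm_expi.
  split; first by exists (cc j); split => //; rewrite (pre j k0) E Hg.
  by rewrite /final_state (pre j k0) E (prob_odd_final q0).
move=> k1 j _.
have k0 : (0 < #|K|)%N by rewrite k1.
have E : expi ((#|K|.-1)%:R * ((pi : R) / 2%:R ^+ j)) = (-1) ^+ false.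
  by rewrite k1 /= mul0r expi0 expr0.
have nc : `|cc j| = 1 by apply: norm_expi.
split; first by exists (cc j); split => //; rewrite (pre j k0) E Hg'.
by rewrite /final_state (pre j k0) E (prob_even_final q0).
Qed.
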